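(* Let $(\Re,S,V)$ be a vector $S$-metric space and let $H,K,P,Q:\Re\to\Re$ be four maps satisfying: (a) the pairs $(H,P)$ and $(K,Q)$ satisfy the $CLR_{(P,Q)}$ property, i.e. there exist sequences $(x_n)$, $(y_n)$ in $\Re$ and points $\xi,a,b\in\Re$ such that $Hx_n\to\xi$, $Px_n\to\xi$, $Ky_n\to\xi$, $Qy_n\to\xi$ (convergence in $(\Re,S,V)$) and $\xi=Pa=Qb$; (b) the pairs $(H,P)$ and $(K,Q)$ are weakly compatible; (c) there is $\rho\in[0,1)$ such that for all $x,y,z\in\Re$, $$S(Hx,Hy,Kz)\preceq \rho\, U(x,y,z),$$ where $$U(x,y,z)=\max\Big[S(Px,Py,Qz),\ S(Px,Px,Hx),\ S(Qz,Qz,Kz),\ \tfrac12\{S(Px,Py,Kz)+S(Qz,Qz,Hx)\}\Big]$$ (the maximum being the supremum in $V$). Then $H,K,P,Q$ have a unique common fixed point in $\Re$, i.e. there is exactly one $\xi\in\Re$ with $H\xi=K\xi=P\xi=Q\xi=\xi$.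
   Context: A vector lattice (Riesz space) $V$ is an ordered real vector space whose order $\preceq$ is a lattice order; $\max$ of finitely many elements of $V$ denotes their supremum. Given a vector lattice $V$ and a nonempty set $\Re$, a vector $S$-metric is a map $S:\Re^3\to V$ such that for all $x_1,x_2,x_3,\alpha\in\Re$: (a) $S(x_1,x_2,x_3)\succeq 0$; (b) $S(x_1,x_2,x_3)=0$ iff $x_1=x_2=x_3$; (c) $S(x_1,x_2,x_3)\preceq S(x_1,x_2,\alpha)+S(x_2,x_2,\alpha)+S(x_3,x_3,\alpha)$. The triple $(\Re,S,V)$ is a vector $S$-metric space. A sequence $(x_n)$ in $\Re$ converges to $x\in\Re$ if there is a sequence $(c_n)$ in $V$ decreasing with infimum $0$ such that $S(x_n,x_n,x)\preceq c_n$ for all $n$. Two maps $A,B:\Re\to\Re$ are weakly compatible if $ABx=BAx$ whenever $Ax=Bx$, $x\in\Re$. *)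

(* Defs.v *)
From HB Require Import structures.
From mathcomp Require Import all_boot all_order all_algebra.
From mathcomp Require Import reals.
Set Implicit Arguments. Unset Strict Implicit. Unset Printing Implicit Defensive.
Import Order.TTheory GRing.Theory Num.Theory.
Local Open Scope ring_scope.

(* A vector lattice (Riesz space) over the reals R : an R-vector space with a
   partial order compatible with the linear structure (translation invariant,
   invariant under nonnegative scaling) in which every two elements have a
   supremum [vmax].  (In an ordered vector space existence of binary suprema
   implies existence of binary infima: inf x y = - sup (-x) (-y).) *)
Record vectorLattice (R : realType) := VectorLattice {
  vcar :> lmodType R;
  vle : vcar -> vcar -> Prop;
  vle_refl : forall x, vle x x;
  vle_antisym : forall x y, vle x y -> vle y x -> x = y;
  vle_trans : forall x y z, vle x y -> vle y z -> vle x z;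
  vle_add : forall x y z, vle x y -> vle (x + z) (y + z);
  vle_scale : forall (a : R) x y, 0 <= a -> vle x y -> vle (a *: x) (a *: y);
  vmax : vcar -> vcar -> vcar;
  vmax_ubl : forall x y, vle x (vmax x y);
  vmax_ubr : forall x y, vle y (vmax x y);
  vmax_least : forall x y z, vle x z -> vle y z -> vle (vmax x y) z
}.

Arguments vle {R} v : rename.
Arguments vmax {R} v : rename.

Definition is_vSmetric (R : realType) (V : vectorLattice R) (X : Type)
  (S : X -> X -> X -> vcar V) : Prop :=
  (forall x1 x2 x3, vle V 0 (S x1 x2 x3)) /\
  (forall x1 x2 x3, S x1 x2 x3 = 0 <-> (x1 = x2 /\ x2 = x3)) /\
  (forall x1 x2 x3 a,
      vle V (S x1 x2 x3) (S x1 x2 a + S x2 x2 a + S x3 x3 a)).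

Definition decr_to_zero (R : realType) (V : vectorLattice R) (c : nat -> vcar V) : Prop :=
  (forall n, vle V (c n.+1) (c n)) /\
  (forall n, vle V 0 (c n)) /\
  (forall w, (forall n, vle V w (c n)) -> vle V w 0).

Definition vS_converges (R : realType) (V : vectorLattice R) (X : Type)
  (S : X -> X -> X -> vcar V) (x : nat -> X) (l : X) : Prop :=
  exists c : nat -> vcar V, decr_to_zero c /\ forall n, vle V (S (x n) (x n) l) (c n).

Definition weakly_compatible (X : Type) (A B : X -> X) : Prop :=
  forall x, A x = B x -> A (B x) = B (A x).

Definition CLR_PQ (R : realType) (V : vectorLattice R) (X : Type)
  (S : X -> X -> X -> vcar V) (H P K Q : X -> X) : Prop :=
  exists (x y : nat -> X) (xi a b : X),
    vS_converges S (fun n => H (x n)) xi /\ vS_converges S (fun n => P (x n)) xi /\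
    vS_converges S (fun n => K (y n)) xi /\ vS_converges S (fun n => Q (y n)) xi /\
    xi = P a /\ xi = Q b.

(* Main.v *)
Require Import Defs.
From HB Require Import structures.
From mathcomp Require Import all_boot all_order all_algebra.
From mathcomp Require Import reals.
Import Order.TTheory GRing.Theory Num.Theory.
Local Open Scope ring_scope.
Set Implicit Arguments. Unset Strict Implicit.

Section VL.
Variables (R : realType) (V : vectorLattice R).
Local Notation le := (vle V).

Lemma vrefl (x : V) : le x x.
Proof. exact: vle_refl. Qed.

Lemma vaddl (x y z : V) : le x y -> le (z + x) (z + y).
Proof. by move=> h; rewrite ![z + _]addrC; apply: vle_add. Qed.

Lemma vadd2 (a b c d : V) : le a b -> le c d -> le (a + c) (b + d).
Proof. move=> h1 h2; apply: (vle_trans (y := b + c)); [exact: vle_add | exact: vaddl]. Qed.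

Lemma vge0D (a b : V) : le 0 a -> le 0 b -> le 0 (a + b).
Proof. by move=> h1 h2; rewrite -(addr0 0); apply: vadd2. Qed.

Lemma vleDr (a b c : V) : le a b -> le 0 c -> le a (b + c).
Proof. move=> h1 h2; rewrite -(addr0 a); exact: vadd2. Qed.

Lemma vleDl (a b c : V) : le a b -> le 0 c -> le a (c + b).
Proof. by move=> h1 h2; rewrite addrC; apply: vleDr. Qed.

Lemma vscale_ge0 (a : R) (x : V) : 0 <= a -> le 0 x -> le 0 (a *: x).
Proof. by move=> ha hx; rewrite -(scaler0 _ a); apply: vle_scale. Qed.

Lemma vscale_inv (a : R) (x y : V) : 0 < a -> le (a *: x) (a *: y) -> le x y.
Proof.
move=> ha h; have hi : 0 <= a^-1 by rewrite invr_ge0 ltW.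
have := vle_scale hi h.
by rewrite !scalerA mulVf ?gt_eqF // !scale1r.
Qed.

Lemma decr_mono (c : nat -> V) : (forall n, le (c n.+1) (c n)) ->
  forall m k, (m <= k)%N -> le (c k) (c m).
Proof.
move=> hc m k /subnK <-; elim: (k - m)%N => [|j IH]; first exact: vle_refl.
by rewrite addSn; apply: vle_trans (hc _) IH.
Qed.

Lemma dz_add (c d : nat -> V) : decr_to_zero c -> decr_to_zero d ->
  decr_to_zero (fun n => c n + d n).
Proof.
move=> [c1 [c2 c3]] [d1 [d2 d3]]; split; [|split].
- by move=> n; apply: vadd2.
- by move=> n; apply: vge0D.
- move=> w hw.
  have h1 : forall n m, le (w - d n) (c m).
    move=> n m; have := hw (maxn n m) => h.
    have h' : le w (c m + d n).
      apply: vle_trans h _; apply: vadd2; apply: decr_mono => //.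
      exact: leq_maxr. exact: leq_maxl.
    have := vle_add (- d n) h'; by rewrite addrK.
  have h2 : forall n, le w (d n).
    move=> n; have := vle_add (d n) (c3 _ (h1 n)); by rewrite subrK add0r.
  exact: d3.
Qed.

Lemma dz_scale (a : R) (c : nat -> V) : 0 <= a -> decr_to_zero c ->
  decr_to_zero (fun n => a *: c n).
Proof.
move=> ha [c1 [c2 c3]]; split; [|split].
- by move=> n; apply: vle_scale.
- by move=> n; apply: vscale_ge0.
- move=> w hw; move: ha; rewrite le_eqVlt => /orP [/eqP a0|ha].
    by have := hw 0%N; rewrite -a0 scale0r.
  have hi : 0 <= a^-1 by rewrite invr_ge0 ltW.
  have h : le (a^-1 *: w) 0.
    apply: c3 => n; have := vle_scale hi (hw n).
    by rewrite scalerA mulVf ?gt_eqF // scale1r.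
  have := vle_scale (ltW ha) h.
  by rewrite scalerA mulfV ?gt_eqF // scale1r scaler0.
Qed.

Lemma contract (rho : R) (u : V) (g : nat -> V) : 0 <= rho -> rho < 1 ->
  le 0 u -> decr_to_zero g -> (forall n, le u (rho *: u + g n)) -> u = 0.
Proof.
move=> r0 r1 u0 [_ [_ g3]] h.
have hp : 0 < 1 - rho by rewrite subr_gt0.
have t0 : le ((1 - rho) *: u) 0.
  apply: g3 => n; have := vle_add (- (rho *: u)) (h n).
  by rewrite addrAC subrr add0r scalerBl scale1r.
have t1 : le 0 ((1 - rho) *: u) by apply: vscale_ge0 => //; exact: ltW.
have := vle_antisym t0 t1 => /(congr1 (fun v => (1 - rho)^-1 *: v)).
by rewrite scalerA mulVf ?gt_eqF // scale1r scaler0.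
Qed.

Lemma dz0 : decr_to_zero (fun _ : nat => (0 : V)).
Proof.
split; first by move=> n; exact: vle_refl.
split; first by move=> n; exact: vle_refl.
by move=> w /(_ 0%N).
Qed.

Lemma contract0 (rho : R) (u : V) : 0 <= rho -> rho < 1 ->
  le 0 u -> le u (rho *: u) -> u = 0.
Proof.
move=> r0 r1 u0 h; apply: (@contract rho u (fun _ => 0) r0 r1 u0 dz0) => n.
by rewrite addr0.
Qed.

Lemma maxle (A B C D E M : V) : le A M -> le B M -> le C M -> le D M -> le E M ->
  le (vmax V A (vmax V B (vmax V C ((2 : R)^-1 *: (D + E))))) M.
Proof.
move=> hA hB hC hD hE; do 3 (apply: vmax_least => //).
have -> : M = (2 : R)^-1 *: (M + M).
  by rewrite -mulr2n -scaler_nat scalerA mulVf ?pnatr_eq0 // scale1r.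
by apply: vle_scale; [rewrite invr_ge0 | apply: vadd2].
Qed.

End VL.

Theorem theorem2p1 (R : realType) (V : vectorLattice R) (X : Type)
  (S : X -> X -> X -> vcar V) (H K P Q : X -> X) (rho : R) :
  is_vSmetric S ->
  CLR_PQ S H P K Q ->
  weakly_compatible H P -> weakly_compatible K Q ->
  0 <= rho -> rho < 1 ->
  (forall x y z,
     vle V (S (H x) (H y) (K z))
       (rho *: vmax V (S (P x) (P y) (Q z))
                 (vmax V (S (P x) (P x) (H x))
                   (vmax V (S (Q z) (Q z) (K z))
                     ((2 : R)^-1 *: (S (P x) (P y) (K z) + S (Q z) (Q z) (H x))))))) ->
  exists! xi : X, H xi = xi /\ K xi = xi /\ P xi = xi /\ Q xi = xi.
Proof.
move=> [S0 [Sz St]] [x [y [xi [a [b [[c [hc Hc]] [[c2 [hc2 Hc2]]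
  [[c3 [hc3 Hc3]] [[c4 [hc4 Hc4]] [Ea Eb]]]]]]]]]] wHP wKQ r0 r1 hU.
have Sxxx : forall z, S z z z = 0 by move=> z; apply/Sz.
have Seq : forall u v, S u u v = 0 -> u = v by move=> u v /Sz [].
have Ssym : forall u v, S u u v = S v v u.
  move=> u v; apply: vle_antisym.
    by have := St u u v u; rewrite Sxxx !add0r.
  by have := St v v u v; rewrite Sxxx !add0r.
have [c1 [c0 _]] := hc; have [c21 [c20 _]] := hc2.
have [c31 [c30 _]] := hc3; have [c41 [c40 _]] := hc4.
have Kb : K b = xi.
  set u := S xi xi (K b).
  have u0 : vle V 0 u by apply: S0.
  pose e n := c2 n + c2 n + c n.
  have e0 : forall n, vle V 0 (e n) by move=> n; rewrite /e; do 2 apply: vge0D => //.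
  suff : u = 0 by move/Seq.
  apply: (@contract _ _ rho u (fun n => c n + c n + rho *: e n) r0 r1 u0).
    apply: dz_add; first exact: dz_add.
    by apply: dz_scale => //; rewrite /e; apply: dz_add => //; apply: dz_add.
  move=> n.
  have h1 := St xi xi (K b) (H (x n)).
  apply: (vle_trans h1).
  rewrite addrCA -scalerDr.
  apply: vadd2; first by apply: vadd2; rewrite Ssym.
  rewrite Ssym; apply: (vle_trans (hU (x n) (x n) b)); apply: vle_scale => //.
  apply: maxle.
  - by rewrite -Eb; apply: vleDl => //; apply: vle_trans (Hc2 n) _; rewrite /e -addrA; apply: vleDr; [apply: vrefl | apply: vge0D; [apply: c20 | apply: c0]].
  - apply: vleDl => //; apply: vle_trans (St _ _ _ xi) _; rewrite /e; apply: vadd2; first apply: vadd2; done.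
  - by rewrite -Eb; apply: vleDr => //; apply: vrefl.
  - apply: (vle_trans (St _ _ _ xi)); rewrite (Ssym (K b)) -/u [u + _]addrC.
    apply: vadd2; last apply: vrefl.
    by apply: vleDr => //; apply: vadd2.
  - rewrite -Eb Ssym; apply: vleDl => //; apply: vle_trans (Hc n) _; rewrite /e; apply: vleDl; [apply: vrefl | apply: vge0D; apply: c20].
have Ha : H a = xi.
  set v := S xi xi (H a).
  have v0 : vle V 0 v by apply: S0.
  pose e n := c4 n + c4 n + c3 n.
  have e0 : forall n, vle V 0 (e n).
    by move=> n; rewrite /e; apply: vge0D => //; apply: vge0D.
  suff : v = 0 by move/Seq => ->.
  apply: (@contract _ _ rho v (fun n => c3 n + c3 n + rho *: e n) r0 r1 v0).
    apply: dz_add; first exact: dz_add.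
    by apply: dz_scale => //; rewrite /e; apply: dz_add => //; apply: dz_add.
  move=> n.
  have h1 := St xi xi (H a) (K (y n)).
  apply: (vle_trans h1).
  rewrite addrCA -scalerDr.
  apply: vadd2; first by apply: vadd2; rewrite Ssym.
  apply: (vle_trans (hU a a (y n))); apply: vle_scale => //.
  rewrite -Ea; apply: maxle.
  - rewrite Ssym; apply: vleDl => //; apply: vle_trans (Hc4 n) _; rewrite /e -addrA.
    apply: vleDr; [apply: vrefl | apply: vge0D; [apply: c40 | apply: c30]].
  - by apply: vleDr; [apply: vrefl | apply: e0].
  - apply: vleDl => //; apply: vle_trans (St _ _ _ xi) _; rewrite /e.
    by apply: vadd2; [apply: vadd2|].
  - rewrite Ssym; apply: vleDl => //; apply: vle_trans (Hc3 n) _; rewrite /e.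
    apply: vleDl; [apply: vrefl | apply: vge0D; apply: c40].
  - apply: (vle_trans (St _ _ _ xi)); rewrite (Ssym (H a)) -/v [v + _]addrC.
    apply: vadd2; last apply: vrefl.
    by apply: vleDr => //; apply: vadd2.
have HP : H xi = P xi by have := wHP a; rewrite Ha -Ea; apply.
have KQ : K xi = Q xi by have := wKQ b; rewrite Kb -Eb; apply.
have Hf : H xi = xi.
  suff : S (H xi) (H xi) xi = 0 by move/Seq.
  apply: (contract0 r0 r1 (S0 _ _ _)).
  have := hU xi xi b; rewrite Kb -Eb -HP => h; apply: vle_trans h _.
  apply: vle_scale => //; apply: maxle; rewrite ?Sxxx ?(Ssym xi (H xi));
    first [apply: vrefl | apply: S0].
have Kf : K xi = xi.
  suff : S xi xi (K xi) = 0 by move/Seq.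
  apply: (contract0 r0 r1 (S0 _ _ _)).
  have := hU a a xi; rewrite Ha -Ea -KQ => h; apply: vle_trans h _.
  apply: vle_scale => //; apply: maxle; rewrite ?Sxxx ?(Ssym (K xi) xi);
    first [apply: vrefl | apply: S0].
exists xi; split.
  by rewrite -HP -KQ Hf Kf.
move=> z [hz1 [hz2 [hz3 hz4]]].
suff : S xi xi z = 0 by move/Seq.
apply: (contract0 r0 r1 (S0 _ _ _)).
have := hU xi xi z; rewrite hz2 hz4 -HP Hf => h; apply: vle_trans h _.
apply: vle_scale => //; apply: maxle; rewrite ?Sxxx ?(Ssym z xi);
  first [apply: vrefl | apply: S0].
Qed.
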